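(* Let $\mathcal D$ be universal with at least two blocks, $\mathcal B$ the block containing $\min(\mathcal D\setminus\{0\})$, $\mathbf m=\max\mathcal B$, $\mathrm M=(M,d)\in\mathfrak U_{\mathcal D}$, and $\sim$ the equivalence relation $x\sim y\iff d(x,y)\le\mathbf m$. Let $\mathrm M/\!\sim$ be the set of $\sim$-classes with the metric $d_{\min}(A,B)=\min\{d(a,b):a\in A,b\in B\}$, and let $\mathcal D_{\min}$ be its set of distances. Then $\mathcal D_{\min}$ is universal and $\mathrm M/\!\sim\ \in\mathfrak U_{\mathcal D_{\min}}$. Moreover, if $N$ is the point set of a copy of $\mathrm M/\!\sim$ in $\mathrm M/\!\sim$, then the subspace of $\mathrm M$ on $\bigcup N$ (the union of the classes belonging to $N$) is a copy of $\mathrm M$ in $\mathrm M$.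
   Context: $\mathcal D$ is a finite subset of $\mathbb R_{\ge0}$ containing $0$. $\mathfrak U_{\mathcal D}$ is the class of countable homogeneous metric spaces (every isometry between finite subspaces extends to an isometry of the space onto itself) with distance set exactly $\mathcal D$ into which every finite metric space with distances in $\mathcal D$ embeds isometrically; $\mathcal D$ is universal if this class is nonempty. A copy of a space in itself is the image of an isometric embedding of the space into itself. For $r\in\mathcal D$ with $r<\max\mathcal D$, $r^{+}$ is the smallest element of $\mathcal D$ larger than $r$; for $r>0$, $r^{-}$ is the largest element of $\mathcal D$ smaller than $r$. A block of $\mathcal D$ is a nonempty set $\mathcal B=\{b_0<b_1<\dots<b_n\}\subseteq\mathcal D\setminus\{0\}$ such that $b_0>2b_0^{-}$, $b_{i+1}=b_i^{+}$ for all $i<n$, and $b_i+b_0\ge b_{i+1}$ for all $i<n$; for universal $\mathcal D$ the blocks partition $\mathcal D\setminus\{0\}$. *)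

(* Defs.v *)
From Stdlib Require Import Reals List ClassicalEpsilon.
Open Scope R_scope.

Definition is_metric {X : Type} (d : X -> X -> R) : Prop :=
  (forall x y, 0 <= d x y) /\
  (forall x y, d x y = 0 <-> x = y) /\
  (forall x y, d x y = d y x) /\
  (forall x y z, d x z <= d x y + d y z).

Definition countable (X : Type) : Prop :=
  exists f : X -> nat, forall x y, f x = f y -> x = y.

Definition dist_set {X : Type} (d : X -> X -> R) (r : R) : Prop :=
  exists x y, d x y = r.

Definition finite_set (D : R -> Prop) : Prop :=
  exists l : list R, forall r, D r <-> In r l.
Definition finite_type (F : Type) : Prop :=
  exists l : list F, forall x, In x l.

Definition dist_setting (D : R -> Prop) : Prop :=
  finite_set D /\ D 0 /\ forall r, D r -> 0 <= r.

Definition isometric {X Y : Type} (dX : X -> X -> R) (dY : Y -> Y -> R)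
  (f : X -> Y) : Prop := forall x y, dY (f x) (f y) = dX x y.

(** Homogeneity: every isometry between finite subspaces (given as a map g
    defined on the finite set of points l, isometric there) extends to an
    isometry of the space onto itself. *)
Definition homogeneous {X : Type} (d : X -> X -> R) : Prop :=
  forall (l : list X) (g : X -> X),
    (forall x y, In x l -> In y l -> d (g x) (g y) = d x y) ->
    exists h : X -> X, isometric d d h /\ (forall y, exists x, h x = y) /\
      (forall x, In x l -> h x = g x).

Definition in_U (D : R -> Prop) (X : Type) (d : X -> X -> R) : Prop :=
  is_metric d /\ countable X /\ homogeneous d /\
  (forall r, dist_set d r <-> D r) /\
  (forall (F : Type) (e : F -> F -> R),
      finite_type F -> is_metric e -> (forall a b, D (e a b)) ->
      exists f : F -> X, isometric e d f).

Definition universal (D : R -> Prop) : Prop :=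
  dist_setting D /\ exists (X : Type) (d : X -> X -> R), in_U D X d.

Definition is_pred (D : R -> Prop) (r p : R) : Prop :=
  D p /\ p < r /\ forall q, D q -> q < r -> q <= p.
Definition is_succ (D : R -> Prop) (r s : R) : Prop :=
  D s /\ r < s /\ forall q, D q -> r < q -> s <= q.

Definition consec (B : R -> Prop) (b c : R) : Prop :=
  B b /\ B c /\ b < c /\ forall e, B e -> ~ (b < e /\ e < c).

Definition block_cond (D : R -> Prop) (B : R -> Prop) : Prop :=
  (forall b, B b -> D b /\ b <> 0) /\
  exists b0, B b0 /\ (forall b, B b -> b0 <= b) /\
    (forall p, is_pred D b0 p -> b0 > 2 * p) /\
    (forall b c, consec B b c -> is_succ D b c) /\
    (forall b c, consec B b c -> b + b0 >= c).

(** A block: an inclusion-maximal set satisfying the block conditions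
    (this is the reading under which blocks partition D \ {0}). *)
Definition is_block (D : R -> Prop) (B : R -> Prop) : Prop :=
  block_cond D B /\
  forall B', block_cond D B' -> (forall r, B r -> B' r) -> forall r, B' r -> B r.

Definition sim_class {M : Type} (d : M -> M -> R) (m : R) (x : M) : M -> Prop :=
  fun y => d x y <= m.

Definition classes {M : Type} (d : M -> M -> R) (m : R) : Type :=
  { A : M -> Prop | exists x, A = sim_class d m x }.

(** d_min(A,B) = min { d(a,b) : a in A, b in B } (chosen by epsilon;
    the minimum exists since the distance set is finite). *)
Definition dmin {M : Type} (d : M -> M -> R) (A B : M -> Prop) : R :=
  epsilon (inhabits 0) (fun r =>
    (exists a b, A a /\ B b /\ d a b = r) /\
    (forall a b, A a -> B b -> r <= d a b)).

Definition dquot {M : Type} (d : M -> M -> R) (m : R)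
  (A B : classes d m) : R := dmin d (proj1_sig A) (proj1_sig B).

Definition is_copy {X : Type} (d : X -> X -> R) (S : X -> Prop) : Prop :=
  exists f : X -> X, isometric d d f /\ forall y, S y <-> exists x, f x = y.

(* Main.v *)
Require Import Defs.
From Stdlib Require Import Reals List ClassicalEpsilon Lra Classical ProofIrrelevance FunctionalExtensionality PropExtensionality.
Open Scope R_scope.

Lemma sig_eq {A} (P : A -> Prop) (x y : {a | P a}) : proj1_sig x = proj1_sig y -> x = y.
Proof. destruct x as [x px], y as [y py]; simpl; intros ->. f_equal. apply proof_irrelevance. Qed.

Lemma fin_min (l : list R) (P : R -> Prop) : (forall r, P r -> In r l) -> (exists r, P r) ->
  exists r, P r /\ forall s, P s -> r <= s.
Proof.
  revert P; induction l as [|a l IH]; intros P Hl [r Hr].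
  - destruct (Hl r Hr).
  - destruct (classic (exists r, P r /\ r <> a)) as [[r' [Hr' Hne]]|Hno].
    + destruct (IH (fun r => P r /\ r <> a)) as [x [[Px Hxa] Hmin]].
      { intros s [Ps Hsa]. destruct (Hl s Ps); [congruence|assumption]. }
      { eauto. }
      destruct (classic (P a)) as [Pa|nPa].
      * destruct (Rle_dec a x).
        -- exists a. split; auto. intros s Ps. destruct (Req_dec s a) as [->|Hsa]; [lra|].
           specialize (Hmin s (conj Ps Hsa)). lra.
        -- exists x. split; auto. intros s Ps. destruct (Req_dec s a) as [->|Hsa]; [lra|].
           apply Hmin; auto.
      * exists x. split; auto. intros s Ps. apply Hmin. split; auto. intros ->; contradiction.
    + exists r. split; auto. intros s Ps.
      assert (r = a) by (apply NNPP; intro; apply Hno; eauto).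
      assert (s = a) by (apply NNPP; intro; apply Hno; eauto). lra.
Qed.

Lemma fin_max (l : list R) (P : R -> Prop) : (forall r, P r -> In r l) -> (exists r, P r) ->
  exists r, P r /\ forall s, P s -> s <= r.
Proof.
  intros Hl [r Hr].
  destruct (fin_min (map Ropp l) (fun x => P (- x))) as [x [Px Hx]].
  { intros s Ps. apply Hl in Ps. replace s with (- - s) by ring. apply in_map; auto. }
  { exists (- r). replace (- - r) with r by ring. auto. }
  exists (- x). split; auto. intros s Ps. specialize (Hx (- s)). replace (- - s) with s in Hx by ring.
  specialize (Hx Ps). lra.
Qed.

Lemma fin_sub (l : list R) (P : R -> Prop) : (forall r, P r -> In r l) ->
  exists l', forall r, P r <-> In r l'.
Proof.
  revert P; induction l as [|a l IH]; intros P Hl.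
  - exists nil. intros r; split; [intros H; apply (Hl r H)|intros []].
  - destruct (IH (fun r => P r /\ r <> a)) as [l' Hl'].
    { intros s [Ps Hsa]. destruct (Hl s Ps); [congruence|assumption]. }
    destruct (classic (P a)) as [Pa|nPa].
    + exists (a :: l'). intros r; split.
      * intros Pr. destruct (Req_dec r a) as [->|Hra]; [left; auto|right; apply Hl'; auto].
      * intros [<-|Hr]; auto. apply Hl' in Hr; tauto.
    + exists l'. intros r; split.
      * intros Pr. apply Hl'. split; auto. intros ->; contradiction.
      * intros Hr; apply Hl' in Hr; tauto.
Qed.

Lemma enum_sig {A} (l : list A) (P : A -> Prop) :
  exists L : list {x | P x}, forall x, In (proj1_sig x) l -> In x L.
Proof.
  induction l as [|a l IH].
  - exists nil; intros x [].
  - destruct IH as [L HL]. destruct (classic (P a)) as [Pa|nPa].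
    + exists (exist P a Pa :: L). intros x [Hx|Hx].
      * left. apply sig_eq. simpl; auto.
      * right; auto.
    + exists L. intros x [Hx|Hx]; auto. exfalso; apply nPa; rewrite Hx; apply proj2_sig.
Qed.

Section Base.
Variable D : R -> Prop.
Variable M : Type.
Variable d : M -> M -> R.
Hypothesis HU : in_U D M d.

Lemma d_nonneg x y : 0 <= d x y. Proof. apply (proj1 (proj1 HU)). Qed.
Lemma d_eq0 x y : d x y = 0 -> x = y. Proof. apply (proj1 (proj2 (proj1 HU)) x y). Qed.
Lemma d_refl x : d x x = 0. Proof. apply (proj1 (proj2 (proj1 HU)) x x); auto. Qed.
Lemma d_sym x y : d x y = d y x. Proof. apply (proj1 (proj2 (proj2 (proj1 HU)))). Qed.
Lemma d_tri x y z : d x z <= d x y + d y z. Proof. apply (proj2 (proj2 (proj2 (proj1 HU)))). Qed.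
Lemma d_inD x y : D (d x y).
Proof. destruct HU as [_ [_ [_ [H _]]]]. apply H. exists x, y; auto. Qed.
Hypothesis HD0 : D 0.

Lemma M_inhab : exists x : M, True.
Proof.
  destruct HU as [_ [_ [_ [HD Huniv]]]].
  destruct (Huniv unit (fun _ _ => 0)) as [f _].
  - exists (tt :: nil). intros []; left; auto.
  - split; [intros; lra|]. split; [intros [] []; split; auto|]. split; [auto|intros; lra].
  - intros; auto.
  - exists (f tt); auto.
Qed.

Lemma EP (l : list (M * R)) :
  (forall p, In p l -> D (snd p) /\ 0 < snd p) ->
  (forall p q, In p l -> In q l ->
     snd p <= snd q + d (fst p) (fst q) /\ d (fst p) (fst q) <= snd p + snd q) ->
  exists w, forall p, In p l -> d w (fst p) = snd p.
Proof.
  intros Hpos Htri.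
  set (T := {p : M * R | In p l}).
  set (e := fun x y : option T => match x, y with
     | None, None => 0
     | None, Some q => snd (proj1_sig q)
     | Some p, None => snd (proj1_sig p)
     | Some p, Some q => d (fst (proj1_sig p)) (fst (proj1_sig q)) end).
  destruct (enum_sig l (fun p => In p l)) as [LT HLT].
  assert (HLT' : forall t : T, In t LT) by (intros t; apply HLT; apply (proj2_sig t)).
  pose proof HU as HU'. destruct HU' as [Hm [_ [Hhom [_ Huniv]]]].
  destruct (Huniv (option T) e) as [f Hf]; [| | |unfold isometric in Hf].
  - exists (None :: map Some LT). intros [t|]; [right; apply in_map; auto|left; auto].
  - split; [|split; [|split]].
    + intros [p|] [q|]; simpl; [apply d_nonneg | destruct (Hpos _ (proj2_sig p)); lra | destruct (Hpos _ (proj2_sig q)); lra | lra].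
    + intros [p|] [q|]; simpl; split; intros H.
      * f_equal. apply sig_eq. destruct p as [[a ra] Hp], q as [[b rb] Hq]; simpl in *.
        apply d_eq0 in H. subst b. destruct (Htri _ _ Hp Hq) as [H1 _]. destruct (Htri _ _ Hq Hp) as [H2 _].
        simpl in *. rewrite d_refl in H1, H2. f_equal; lra.
      * inversion H; subst. apply d_refl.
      * destruct (Hpos _ (proj2_sig p)); lra.
      * discriminate.
      * destruct (Hpos _ (proj2_sig q)); lra.
      * discriminate.
      * reflexivity.
      * reflexivity.
    + intros [p|] [q|]; simpl; try reflexivity. apply d_sym.
    + intros [p|] [q|] [r|]; simpl.
      * apply d_tri.
      * destruct (Htri _ _ (proj2_sig p) (proj2_sig q)); lra.
      * destruct (Htri _ _ (proj2_sig p) (proj2_sig r)); lra.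
      * lra.
      * destruct (Htri _ _ (proj2_sig r) (proj2_sig q)); rewrite d_sym; lra.
      * destruct (Hpos _ (proj2_sig q)); lra.
      * lra.
      * lra.
  - intros [p|] [q|]; simpl; [apply d_inD|apply (Hpos _ (proj2_sig p))|apply (Hpos _ (proj2_sig q))|apply HD0].
  - set (g := fun x : M => epsilon (inhabits x) (fun y => exists t : T, f (Some t) = x /\ y = fst (proj1_sig t))).
    assert (Hg : forall t : T, g (f (Some t)) = fst (proj1_sig t)).
    { intros t. unfold g.
      destruct (epsilon_spec (inhabits (f (Some t))) (fun y => exists t0 : T, f (Some t0) = f (Some t) /\ y = fst (proj1_sig t0))) as [t' [H1 H2]].
      { exists (fst (proj1_sig t)), t; auto. }
      rewrite H2. apply d_eq0. change (e (Some t') (Some t) = 0). unfold isometric in Hf. rewrite <- Hf. rewrite H1. apply d_refl. }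
    destruct (Hhom (map (fun t => f (Some t)) LT) g) as [h [Hh1 [Hh2 Hh3]]].
    { intros x y Hx Hy. apply in_map_iff in Hx as [t1 [<- _]]. apply in_map_iff in Hy as [t2 [<- _]].
      rewrite !Hg, Hf. reflexivity. }
    exists (h (f None)). intros p Hp.
    set (t := exist (fun p => In p l) p Hp : T).
    assert (Ht : h (f (Some t)) = fst p).
    { rewrite Hh3. apply Hg. apply (in_map (fun t0 : T => f (Some t0))). auto. }
    rewrite <- Ht. rewrite Hh1, Hf. reflexivity.
Qed.

Ltac ep_pairs := let p := fresh "p" in let q := fresh "q" in let Hp := fresh in let Hq := fresh in
  intros p q Hp Hq; simpl in Hp, Hq;
  repeat (destruct Hp as [Hp|Hp]; [subst p|]); try contradiction;
  repeat (destruct Hq as [Hq|Hq]; [subst q|]); try contradiction; simpl.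

Lemma FV a b c dd e : D a -> D b -> D c -> D dd -> D e -> 0<a -> 0<b -> 0<c -> 0<dd -> 0<e ->
 a <= b + e -> b <= a + e -> e <= a + b -> c <= dd + e -> dd <= c + e -> e <= c + dd ->
 exists f, D f /\ f <= a + c /\ a <= c + f /\ c <= a + f /\ f <= b + dd /\ b <= dd + f /\ dd <= b + f.
Proof.
  intros.
  destruct M_inhab as [u _].
  destruct (EP ((u, e) :: nil)) as [v Hv].
  { intros p [<-|[]]; simpl; auto. }
  { ep_pairs. rewrite d_refl; lra. }
  assert (Huv : d v u = e) by (apply (Hv (u,e)); left; auto).
  assert (Hvu : d u v = e) by (rewrite d_sym; auto).
  destruct (EP ((u, a) :: (v, b) :: nil)) as [p Hp].
  { intros x [<-|[<-|[]]]; simpl; auto. }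
  { ep_pairs; rewrite ?d_refl, ?Huv, ?Hvu; lra. }
  destruct (EP ((u, c) :: (v, dd) :: nil)) as [q Hq].
  { intros x [<-|[<-|[]]]; simpl; auto. }
  { ep_pairs; rewrite ?d_refl, ?Huv, ?Hvu; lra. }
  assert (K1 : d p u = a) by (apply (Hp (u,a)); simpl; auto).
  assert (K2 : d p v = b) by (apply (Hp (v,b)); simpl; auto).
  assert (K3 : d q u = c) by (apply (Hq (u,c)); simpl; auto).
  assert (K4 : d q v = dd) by (apply (Hq (v,dd)); simpl; auto).
  exists (d p q). split; [apply d_inD|].
  pose proof (d_tri p u q). pose proof (d_tri u p q). pose proof (d_tri p q u).
  pose proof (d_tri p v q). pose proof (d_tri v p q). pose proof (d_tri p q v).
  rewrite (d_sym u p), (d_sym u q) in *. rewrite (d_sym v p), (d_sym v q) in *.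
  rewrite (d_sym q u) in *. rewrite (d_sym q v) in *.
  repeat split; lra.
Qed.
End Base.

Section Quot.
Variable D : R -> Prop.
Variable M : Type.
Variable d : M -> M -> R.
Hypothesis HU : in_U D M d.
Hypothesis HD0 : D 0.
Hypothesis HfinD : finite_set D.
Variable m : R.
Hypothesis Dm : D m.
Hypothesis mpos : 0 < m.
Hypothesis F1 : forall r, D r -> m < r -> 2 * m < r.

Notation Q := (classes d m).
Notation dq := (dquot d m).
Let d_nonneg := d_nonneg D M d HU.
Let d_eq0 := d_eq0 D M d HU.
Let d_refl := d_refl D M d HU.
Let d_sym := d_sym D M d HU.
Let d_tri := d_tri D M d HU.
Let d_inD := d_inD D M d HU.
Let EP := EP D M d HU HD0.
Let FV := FV D M d HU HD0.
Let M_inhab := M_inhab D M d HU HD0.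

Definition cls (x : M) : Q := exist _ (sim_class d m x) (ex_intro _ x eq_refl).

Lemma sim_trans x y z : d x y <= m -> d y z <= m -> d x z <= m.
Proof.
  intros. pose proof (d_tri x y z). destruct (Rle_dec (d x z) m) as [|Hn]; auto.
  pose proof (F1 _ (d_inD x z) (Rnot_le_lt _ _ Hn)). lra.
Qed.

Lemma cls_eq x y : d x y <= m -> cls x = cls y.
Proof.
  intros H. apply sig_eq. simpl. unfold sim_class. extensionality z.
  apply propositional_extensionality. split; intros Hz.
  - apply sim_trans with x; auto. rewrite d_sym; auto.
  - apply sim_trans with y; auto.
Qed.

Lemma cls_eq_inv x y : cls x = cls y -> d x y <= m.
Proof.
  intros H. apply (f_equal (fun X : Q => proj1_sig X y)) in H. simpl in H. unfold sim_class in H.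
  rewrite H, d_refl. lra.
Qed.

Lemma mem_cls x : proj1_sig (cls x) x.
Proof. simpl. unfold sim_class. rewrite d_refl. lra. Qed.

Lemma cls_of (X : Q) x : proj1_sig X x -> X = cls x.
Proof.
  destruct X as [A [x0 HA]]. subst A. simpl. intros H.
  rewrite <- (cls_eq x0 x H). apply sig_eq. reflexivity.
Qed.

Lemma cls_surj (X : Q) : exists x, X = cls x.
Proof. destruct X as [A [x0 HA]]. exists x0. apply sig_eq. simpl. auto. Qed.

Lemma mem_of (X : Q) : exists x, proj1_sig X x.
Proof. destruct (cls_surj X) as [x ->]. exists x. apply mem_cls. Qed.

Definition Pmin (X Y : Q) r := (exists a b, proj1_sig X a /\ proj1_sig Y b /\ d a b = r) /\
  (forall a b, proj1_sig X a -> proj1_sig Y b -> r <= d a b).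

Lemma dq_spec X Y : Pmin X Y (dq X Y).
Proof.
  unfold dquot, dmin. apply epsilon_spec.
  destruct HfinD as [lD HlD].
  destruct (fin_min lD (fun r => exists a b, proj1_sig X a /\ proj1_sig Y b /\ d a b = r)) as [r [Hr Hmin]].
  - intros r [a [b [_ [_ <-]]]]. apply HlD. apply d_inD.
  - destruct (mem_of X) as [a Ha]. destruct (mem_of Y) as [b Hb]. exists (d a b), a, b; auto.
  - exists r. split; auto. intros a b Ha Hb. apply Hmin. exists a, b; auto.
Qed.

Lemma Pmin_unique X Y r s : Pmin X Y r -> Pmin X Y s -> r = s.
Proof.
  intros [[a [b [Ha [Hb Hr]]]] H1] [[a' [b' [Ha' [Hb' Hs]]]] H2].
  specialize (H1 _ _ Ha' Hb'). specialize (H2 _ _ Ha Hb). lra.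
Qed.

Lemma dq_eq X Y r : Pmin X Y r -> dq X Y = r.
Proof. intros; eapply Pmin_unique; eauto using dq_spec. Qed.

Lemma dq_real X Y : exists a b, proj1_sig X a /\ proj1_sig Y b /\ d a b = dq X Y.
Proof. apply (proj1 (dq_spec X Y)). Qed.

Lemma dq_le X Y a b : proj1_sig X a -> proj1_sig Y b -> dq X Y <= d a b.
Proof. apply (proj2 (dq_spec X Y)). Qed.

Lemma dq_D X Y : D (dq X Y).
Proof. destruct (dq_real X Y) as [a [b [_ [_ <-]]]]. apply d_inD. Qed.

Lemma dq_nonneg X Y : 0 <= dq X Y.
Proof. destruct (dq_real X Y) as [a [b [_ [_ <-]]]]. apply d_nonneg. Qed.

Lemma dq_self X : dq X X = 0.
Proof.
  apply dq_eq. destruct (mem_of X) as [a Ha]. split.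
  - exists a, a; auto.
  - intros; apply d_nonneg.
Qed.

Lemma dq_sym X Y : dq X Y = dq Y X.
Proof.
  apply dq_eq. destruct (dq_spec Y X) as [[a [b [Ha [Hb Hr]]]] H]. split.
  - exists b, a. rewrite d_sym. auto.
  - intros a' b' Ha' Hb'. rewrite d_sym. auto.
Qed.

Lemma dq_zero X Y : dq X Y = 0 -> X = Y.
Proof.
  intros H. destruct (dq_real X Y) as [a [b [Ha [Hb Hab]]]].
  rewrite H in Hab. apply d_eq0 in Hab. subst b.
  rewrite (cls_of X a Ha), (cls_of Y a Hb). auto.
Qed.

Lemma diff_gt (X Y : Q) a b : X <> Y -> proj1_sig X a -> proj1_sig Y b -> m < d a b.
Proof.
  intros Hne Ha Hb. destruct (Rle_dec (d a b) m) as [H|H]; [|lra].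
  exfalso. apply Hne. rewrite (cls_of X a Ha), (cls_of Y b Hb). apply cls_eq; auto.
Qed.

Lemma dq_gt X Y : X <> Y -> m < dq X Y.
Proof. intros H. destruct (dq_real X Y) as [a [b [Ha [Hb <-]]]]. eapply diff_gt; eauto. Qed.

Lemma Tlem r s t : D r -> D s -> D t -> m < r -> m < s -> m < t ->
  r - s <= m -> s - r <= m -> s - t <= m -> t - s <= m -> r - t <= m /\ t - r <= m.
Proof.
  intros.
  destruct (FV m r m t s) as [f [Hf [K1 [K2 [K3 [K4 [K5 K6]]]]]]]; auto; try lra.
  destruct (Rle_dec f m); [lra|]. pose proof (F1 f Hf ltac:(lra)). lra.
Qed.

Lemma pair_close (X Y : Q) a b a' b' : X <> Y -> proj1_sig X a -> proj1_sig Y b ->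
  proj1_sig X a' -> proj1_sig Y b' -> d a b - d a' b' <= m /\ d a' b' - d a b <= m.
Proof.
  intros Hne Ha Hb Ha' Hb'.
  assert (Haa : d a a' <= m).
  { apply cls_eq_inv. rewrite <- (cls_of X a Ha), <- (cls_of X a' Ha'). auto. }
  assert (Hbb : d b b' <= m).
  { apply cls_eq_inv. rewrite <- (cls_of Y b Hb), <- (cls_of Y b' Hb'). auto. }
  pose proof (d_tri a' a b). pose proof (d_tri a a' b). rewrite (d_sym a' a) in *.
  pose proof (d_tri a' b' b). pose proof (d_tri a' b b'). rewrite (d_sym b' b) in *.
  apply (Tlem (d a b) (d a' b) (d a' b')); auto; try (eapply diff_gt; eauto); lra.
Qed.

Lemma dq_close (X Y : Q) a b : X <> Y -> proj1_sig X a -> proj1_sig Y b ->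
  d a b - dq X Y <= m /\ dq X Y - d a b <= m.
Proof.
  intros Hne Ha Hb. destruct (dq_real X Y) as [a' [b' [Ha' [Hb' <-]]]].
  apply pair_close with X Y; auto.
Qed.

Definition pairs_ok (l : list (M * R)) := forall p q, In p l -> In q l ->
     snd p <= snd q + d (fst p) (fst q) /\ d (fst p) (fst q) <= snd p + snd q.

Lemma move (l : list (M*R)) z :
  (forall p, In p l -> D (snd p) /\ m < snd p) -> pairs_ok l ->
  (forall p, In p l -> d z (fst p) - snd p <= m /\ snd p - d z (fst p) <= m) ->
  exists w, d w z <= m /\ forall p, In p l -> d w (fst p) = snd p.
Proof.
  intros Hpos Hpr Hcl.
  destruct (EP ((z, m) :: l)) as [w Hw].
  - intros p [<-|Hp]; simpl; [split; auto|]. destruct (Hpos p Hp); split; auto; lra.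
  - intros p q [<-|Hp] [<-|Hq]; simpl.
    + rewrite d_refl; lra.
    + destruct (Hpos q Hq). destruct (Hcl q Hq). pose proof (d_nonneg z (fst q)). lra.
    + destruct (Hpos p Hp). destruct (Hcl p Hp). rewrite (d_sym (fst p) z). pose proof (d_nonneg z (fst p)). lra.
    + apply Hpr; auto.
  - exists w. split.
    + pose proof (Hw (z, m) (or_introl eq_refl)) as H; simpl in H; lra.
    + intros p Hp. apply Hw. right; auto.
Qed.

Lemma dq_tri X Y Z : dq X Z <= dq X Y + dq Y Z.
Proof.
  destruct (classic (X = Y)) as [<-|HXY]; [rewrite dq_self; pose proof (dq_nonneg X Z); lra|].
  destruct (classic (Y = Z)) as [<-|HYZ]; [rewrite dq_self; lra|].
  destruct (dq_real X Y) as [x [y [Hx [Hy Hxy]]]].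
  destruct (mem_of Z) as [z Hz].
  destruct (move ((y, dq Y Z) :: nil) z) as [w [Hwz Hw]].
  - intros p [<-|[]]; simpl. split; [apply dq_D|apply dq_gt; auto].
  - intros p q [<-|[]] [<-|[]]; simpl. rewrite d_refl. pose proof (dq_nonneg Y Z); lra.
  - intros p [<-|[]]; simpl. rewrite d_sym. apply dq_close; auto.
  - assert (Hw' : d w y = dq Y Z) by (apply (Hw (y, dq Y Z) (or_introl eq_refl))).
    assert (HwZ : proj1_sig Z w).
    { rewrite (cls_of Z z Hz). simpl. unfold sim_class. rewrite d_sym. auto. }
    pose proof (dq_le X Z x w Hx HwZ). pose proof (d_tri x y w). rewrite (d_sym y w) in *. lra.
Qed.

Lemma dq_inv (h : M -> M) x y : isometric d d h -> (forall z, exists w, h w = z) ->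
  dq (cls (h x)) (cls (h y)) = dq (cls x) (cls y).
Proof.
  intros Hh Hs. apply dq_eq. unfold isometric in Hh.
  destruct (dq_spec (cls x) (cls y)) as [[a [b [Ha [Hb Hab]]]] Hmin]. split.
  - exists (h a), (h b). simpl in *. unfold sim_class in *. rewrite !Hh. auto.
  - intros a' b' Ha' Hb'. destruct (Hs a') as [a0 <-]. destruct (Hs b') as [b0 <-].
    simpl in *. unfold sim_class in *. rewrite Hh in *. apply Hmin; simpl; unfold sim_class; auto.
Qed.

Lemma same_cls (X : Q) a b : proj1_sig X a -> proj1_sig X b -> d a b <= m.
Proof. intros Ha Hb. apply cls_eq_inv. rewrite <- (cls_of X a Ha), <- (cls_of X b Hb). auto. Qed.

Lemma realize (L : list Q) : exists x : Q -> M, (forall X, In X L -> proj1_sig X (x X)) /\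
  (forall X Y, In X L -> In Y L -> d (x X) (x Y) = dq X Y).
Proof.
  induction L as [|X0 L [x [Hx1 Hx2]]].
  - destruct M_inhab as [p _]. exists (fun _ => p). split; intros; contradiction.
  - destruct (classic (In X0 L)) as [Hin|Hnin].
    + exists x. split.
      * intros X [<-|HX]; auto.
      * intros X Y [<-|HX] [<-|HY]; auto.
    + destruct (mem_of X0) as [z Hz].
      assert (Hne : forall Y, In Y L -> X0 <> Y) by (intros Y HY ->; contradiction).
      destruct (move (map (fun Y => (x Y, dq X0 Y)) L) z) as [w [Hwz Hw]].
      * intros p Hp. apply in_map_iff in Hp as [Y [<- HY]]. simpl. split; [apply dq_D|apply dq_gt; auto].
      * intros p q Hp Hq. apply in_map_iff in Hp as [Y [<- HY]]. apply in_map_iff in Hq as [Y' [<- HY']].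
        simpl. rewrite Hx2; auto. pose proof (dq_tri X0 Y' Y). pose proof (dq_tri Y X0 Y').
        rewrite (dq_sym Y' Y) in *. rewrite (dq_sym Y X0) in *. lra.
      * intros p Hp. apply in_map_iff in Hp as [Y [<- HY]]. simpl. apply dq_close; auto.
      * assert (HwX : proj1_sig X0 w).
        { rewrite (cls_of X0 z Hz). simpl. unfold sim_class. rewrite d_sym. auto. }
        assert (Hw' : forall Y, In Y L -> d w (x Y) = dq X0 Y).
        { intros Y HY. apply (Hw (x Y, dq X0 Y)). apply in_map_iff. exists Y; auto. }
        exists (fun X => if excluded_middle_informative (X = X0) then w else x X). split.
        -- intros X HX. destruct (excluded_middle_informative (X = X0)) as [->|Hn]; auto.
           destruct HX as [->|HX]; [congruence|auto].
        -- intros X Y HX HY.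
           destruct (excluded_middle_informative (X = X0)) as [->|HnX];
           destruct (excluded_middle_informative (Y = X0)) as [->|HnY].
           ++ rewrite d_refl, dq_self; auto.
           ++ destruct HY as [->|HY]; [congruence|]. auto.
           ++ destruct HX as [->|HX]; [congruence|]. rewrite d_sym, dq_sym. auto.
           ++ destruct HX as [->|HX]; [congruence|]. destruct HY as [->|HY]; [congruence|]. auto.
Qed.

Definition rep (X : Q) : M := proj1_sig (constructive_indefinite_description _ (mem_of X)).
Lemma rep_mem X : proj1_sig X (rep X).
Proof. unfold rep. apply proj2_sig. Qed.

Lemma cls_rep X : cls (rep X) = X.
Proof. symmetry. apply cls_of. apply rep_mem. Qed.

Lemma Q_hom : homogeneous dq.
Proof.
  intros L g Hg.
  destruct (realize L) as [x [Hx1 Hx2]].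
  destruct (realize (map g L)) as [y [Hy1 Hy2]].
  pose proof HU as HU'. destruct HU' as [_ [_ [Hhom _]]].
  destruct (Hhom (map x L) (fun p => y (g (cls p)))) as [h [Hh1 [Hh2 Hh3]]].
  { intros p q Hp Hq. apply in_map_iff in Hp as [X [<- HX]]. apply in_map_iff in Hq as [Y [<- HY]].
    rewrite <- (cls_of X (x X) (Hx1 X HX)), <- (cls_of Y (x Y) (Hx1 Y HY)).
    rewrite Hy2 by (apply in_map; auto). rewrite Hg by auto. rewrite Hx2 by auto. reflexivity. }
  exists (fun X => cls (h (rep X))). split; [|split].
  - intros X Y. simpl. rewrite dq_inv; auto. rewrite !cls_rep. auto.
  - intros U. destruct (cls_surj U) as [u ->]. destruct (Hh2 u) as [v <-].
    exists (cls v). apply cls_eq. unfold isometric in Hh1. rewrite Hh1.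
    rewrite d_sym. apply same_cls with (cls v); [apply mem_cls|apply rep_mem].
  - intros X HX. rewrite (cls_of (g X) (y (g X))); [|apply Hy1; apply in_map; auto].
    assert (E : h (x X) = y (g X)).
    { rewrite Hh3 by (apply in_map; auto). rewrite <- (cls_of X (x X)); auto. }
    rewrite <- E.
    apply cls_eq. unfold isometric in Hh1. rewrite Hh1. apply same_cls with X; auto. apply rep_mem.
Qed.

Lemma dq_metric : is_metric dq.
Proof.
  split; [|split; [|split]].
  - apply dq_nonneg.
  - intros X Y; split; [apply dq_zero|intros ->; apply dq_self].
  - apply dq_sym.
  - intros X Y Z. apply dq_tri.
Qed.

Lemma Q_countable : countable Q.
Proof.
  pose proof HU as HU'. destruct HU' as [_ [[iota Hi] _]].
  exists (fun X => iota (rep X)). intros X Y H. apply Hi in H.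
  rewrite <- (cls_rep X), <- (cls_rep Y), H. auto.
Qed.

Lemma Q_univ (F : Type) (e : F -> F -> R) : finite_type F -> is_metric e ->
  (forall a b, dist_set dq (e a b)) -> exists f : F -> Q, isometric e dq f.
Proof.
  intros Hfin He Hv.
  pose proof HU as HU'. destruct HU' as [_ [_ [Hhom [_ Huniv]]]].
  destruct (Huniv F e Hfin He) as [f0 Hf0].
  { intros a b. destruct (Hv a b) as [X [Y <-]]. apply dq_D. }
  unfold isometric in Hf0.
  exists (fun a => cls (f0 a)). intros a b.
  destruct He as [Hnn [H0 [Hsy Htr]]].
  destruct (classic (a = b)) as [<-|Hab].
  - rewrite dq_self. symmetry. apply H0; auto.
  - destruct (Hv a b) as [X [Y HXY]].
    assert (Hpos : 0 < e a b).
    { destruct (Hnn a b) as [|Heq]; auto. symmetry in Heq. apply H0 in Heq. contradiction. }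
    assert (HXY' : X <> Y) by (intros ->; rewrite dq_self in HXY; lra).
    destruct (dq_real X Y) as [u [v [Hu [Hv' Huv]]]].
    assert (Hne : u <> v) by (intros ->; rewrite d_refl in Huv; lra).
    destruct (Hhom (u :: v :: nil) (fun p => if excluded_middle_informative (p = u) then f0 a else f0 b))
      as [h [Hh1 [Hh2 Hh3]]].
    { intros p q [<-|[<-|[]]] [<-|[<-|[]]];
      repeat (destruct (excluded_middle_informative _); try congruence);
      rewrite ?d_refl, ?Hf0, ?Hsy; try (symmetry; apply H0; auto);
      rewrite ?Huv, ?HXY; auto; rewrite d_sym, Huv, HXY, Hsy; auto. }
    assert (E1 : h u = f0 a).
    { rewrite Hh3 by (left; auto). destruct (excluded_middle_informative (u = u)); congruence. }
    assert (E2 : h v = f0 b).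
    { rewrite Hh3 by (right; left; auto). destruct (excluded_middle_informative (v = u)); congruence. }
    rewrite <- E1, <- E2, dq_inv; auto.
    rewrite <- (cls_of X u Hu), <- (cls_of Y v Hv'). auto.
Qed.

Section Copy.
Variable f : Q -> Q.
Hypothesis Hf : isometric dq dq f.
Variable N : Q -> Prop.
Hypothesis HN : forall y, N y <-> exists x, f x = y.
Definition Sp (x : M) := exists A : Q, N A /\ proj1_sig A x.

Lemma Sp_cls x : Sp x <-> N (cls x).
Proof.
  split.
  - intros [A [HA Hx]]. rewrite <- (cls_of A x Hx). auto.
  - intros H. exists (cls x). split; auto. apply mem_cls.
Qed.

Lemma S_EP (l : list M) (y : M) : (forall a, In a l -> Sp a) ->
  exists y', Sp y' /\ forall a, In a l -> d y' a = d y a.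
Proof.
  intros Hl. unfold isometric in Hf.
  set (pre := fun X : Q => epsilon (inhabits X) (fun P => f P = X)).
  assert (Hpre : forall X, N X -> f (pre X) = X).
  { intros X HX. unfold pre. apply epsilon_spec. apply HN; auto. }
  assert (HL : forall X, In X (map cls l) -> N X).
  { intros X HX. apply in_map_iff in HX as [a [<- Ha]]. apply Sp_cls; auto. }
  destruct (Q_hom (map cls l) pre) as [k [Hk1 [Hk2 Hk3]]].
  { intros X Y HX HY. rewrite <- Hf, !Hpre; auto. }
  unfold isometric in Hk1.
  set (Y' := f (k (cls y))).
  assert (HNY : N Y') by (apply HN; exists (k (cls y)); auto).
  assert (Hdq : forall a, In a l -> dq Y' (cls a) = dq (cls y) (cls a)).
  { intros a Ha.
    assert (E : f (k (cls a)) = cls a).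
    { rewrite Hk3 by (apply in_map; auto). apply Hpre. apply HL, in_map; auto. }
    unfold Y'. rewrite <- E at 1. rewrite Hf. apply Hk1. }
  destruct (classic (exists a, In a l /\ cls y = cls a)) as [[a [Ha Hya]]|Hno].
  - exists y. split; auto. apply Sp_cls. rewrite Hya. apply Sp_cls; auto.
  - assert (Hne1 : forall a, In a l -> cls y <> cls a) by (intros a Ha E; apply Hno; eauto).
    assert (Hne2 : forall a, In a l -> Y' <> cls a).
    { intros a Ha E. pose proof (Hdq a Ha) as E2. rewrite E, dq_self in E2.
      symmetry in E2. apply dq_zero in E2. apply (Hne1 a Ha); auto. }
    destruct (move (map (fun a => (a, d y a)) l) (rep Y')) as [w [Hwz Hw]].
    + intros p Hp. apply in_map_iff in Hp as [a [<- Ha]]. simpl. split; [apply d_inD|].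
      apply diff_gt with (cls y) (cls a); auto; apply mem_cls.
    + intros p q Hp Hq. apply in_map_iff in Hp as [a [<- Ha]]. apply in_map_iff in Hq as [b [<- Hb]].
      simpl. pose proof (d_tri y b a). pose proof (d_tri a y b). rewrite (d_sym b a), (d_sym a y) in *. lra.
    + intros p Hp. apply in_map_iff in Hp as [a [<- Ha]]. simpl.
      destruct (dq_close Y' (cls a) (rep Y') a) as [K1 K2]; auto; [apply rep_mem|apply mem_cls|].
      destruct (dq_close (cls y) (cls a) y a) as [K3 K4]; auto; [apply mem_cls|apply mem_cls|].
      rewrite Hdq in K1, K2 by auto.
      apply (Tlem (d (rep Y') a) (dq (cls y) (cls a)) (d y a)); auto; try apply d_inD; try apply dq_D;
        try lra; try apply dq_gt; auto;
        [apply diff_gt with Y' (cls a); auto; [apply rep_mem|apply mem_cls]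
        |apply diff_gt with (cls y) (cls a); auto; apply mem_cls].
    + exists w. split.
      * exists Y'. split; auto. rewrite <- (cls_rep Y'). simpl. unfold sim_class. rewrite d_sym. auto.
      * intros a Ha. apply (Hw (a, d y a)). apply in_map_iff. exists a; auto.
Qed.
End Copy.
End Quot.

Section BF.
Variable D : R -> Prop.
Variable M : Type.
Variable d : M -> M -> R.
Hypothesis HU : in_U D M d.
Hypothesis HD0 : D 0.
Variable Sp : M -> Prop.
Hypothesis HS : forall (l : list M) (y : M), (forall a, In a l -> Sp a) ->
  exists y', Sp y' /\ forall a, In a l -> d y' a = d y a.

Let d_eq0 := d_eq0 D M d HU.
Let d_refl := d_refl D M d HU.
Let d_sym := d_sym D M d HU.

Definition Inv (P : list (M * M)) := (forall p, In p P -> Sp (snd p)) /\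
  (forall p q, In p P -> In q P -> d (snd p) (snd q) = d (fst p) (fst q)).

Lemma inh : inhabited M.
Proof. destruct (M_inhab D M d HU HD0) as [p _]. exact (inhabits p). Qed.

Lemma forth P x : Inv P -> exists s, Inv ((x, s) :: P).
Proof.
  intros [I1 I2].
  set (G := fun p => epsilon inh (fun s => In (p, s) P)).
  assert (HG : forall p, In p (map fst P) -> In (p, G p) P).
  { intros p Hp. unfold G. apply epsilon_spec. apply in_map_iff in Hp as [[a b] [E Hab]].
    simpl in E; subst. eauto. }
  pose proof HU as HU'. destruct HU' as [_ [_ [Hhom _]]].
  destruct (Hhom (map fst P) G) as [h [Hh1 [Hh2 Hh3]]].
  { intros p q Hp Hq. apply (I2 (p, G p) (q, G q)); auto. }
  unfold isometric in Hh1.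
  destruct (HS (map snd P) (h x)) as [s [Hs Hsd]].
  { intros a Ha. apply in_map_iff in Ha as [p [<- Hp]]. auto. }
  assert (Key : forall p, In p P -> d s (snd p) = d x (fst p)).
  { intros [p s'] Hp. simpl. rewrite Hsd by (apply in_map_iff; exists (p, s'); auto).
    assert (E : G p = s').
    { apply d_eq0. assert (Hin : In (p, G p) P) by (apply HG; apply in_map_iff; exists (p, s'); auto).
      pose proof (I2 (p, G p) (p, s') Hin Hp) as E'. simpl in E'. rewrite E'. apply d_refl. }
    rewrite <- E, <- Hh3 by (apply in_map_iff; exists (p, s'); auto). apply Hh1. }
  exists s. split.
  - intros p [<-|Hp]; auto.
  - intros p q [<-|Hp] [<-|Hq]; simpl.
    + rewrite !d_refl; auto.
    + apply Key; auto.
    + rewrite d_sym, (d_sym (fst p)). apply Key; auto.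
    + apply I2; auto.
Qed.

Lemma back P s : Inv P -> Sp s -> exists x, Inv ((x, s) :: P).
Proof.
  intros [I1 I2] Hs.
  set (G := fun s' => epsilon inh (fun p => In (p, s') P)).
  assert (HG : forall s', In s' (map snd P) -> In (G s', s') P).
  { intros s' Hp. unfold G. apply epsilon_spec. apply in_map_iff in Hp as [[a b] [E Hab]].
    simpl in E; subst. eauto. }
  pose proof HU as HU'. destruct HU' as [_ [_ [Hhom _]]].
  destruct (Hhom (map snd P) G) as [h [Hh1 [Hh2 Hh3]]].
  { intros p q Hp Hq. symmetry. apply (I2 (G p, p) (G q, q)); auto. }
  unfold isometric in Hh1.
  assert (Key : forall p, In p P -> d (h s) (fst p) = d s (snd p)).
  { intros [p s'] Hp. simpl.
    assert (E : G s' = p).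
    { apply d_eq0. assert (Hin : In (G s', s') P) by (apply HG; apply in_map_iff; exists (p, s'); auto).
      pose proof (I2 (G s', s') (p, s') Hin Hp) as E'. simpl in E'. rewrite <- E'. apply d_refl. }
    rewrite <- E, <- Hh3 by (apply in_map_iff; exists (p, s'); auto). apply Hh1. }
  exists (h s). split.
  - intros p [<-|Hp]; auto.
  - intros p q [<-|Hp] [<-|Hq]; simpl.
    + rewrite !d_refl; auto.
    + symmetry. apply Key; auto.
    + rewrite d_sym, (d_sym (fst p)). symmetry. apply Key; auto.
    + apply I2; auto.
Qed.

Variable iota : M -> nat.
Hypothesis Hiota : forall x y, iota x = iota y -> x = y.

Definition ext_forth (P : list (M*M)) x := (x, epsilon inh (fun s => Inv ((x,s)::P))) :: P.
Definition ext_back (P : list (M*M)) s := (epsilon inh (fun x => Inv ((x,s)::P)), s) :: P.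

Lemma Inv_forth P x : Inv P -> Inv (ext_forth P x).
Proof. intros H. unfold ext_forth. apply (epsilon_spec inh (fun s => Inv ((x,s)::P))). apply forth; auto. Qed.
Lemma Inv_back P s : Inv P -> Sp s -> Inv (ext_back P s).
Proof. intros H Hs. unfold ext_back. apply (epsilon_spec inh (fun x => Inv ((x,s)::P))). apply back; auto. Qed.

Definition stepF n P := match excluded_middle_informative (exists x, iota x = n) with
  | left _ => ext_forth P (epsilon inh (fun x => iota x = n)) | right _ => P end.
Definition stepB n P := match excluded_middle_informative (exists s, Sp s /\ iota s = n) with
  | left _ => ext_back P (epsilon inh (fun s => Sp s /\ iota s = n)) | right _ => P end.
Fixpoint bf n := match n with 0 => nil | S k => stepB k (stepF k (bf k)) end.

Lemma Inv_bf n : Inv (bf n).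
Proof.
  induction n as [|n IH]; simpl.
  - split; intros; contradiction.
  - unfold stepB, stepF.
    destruct (excluded_middle_informative (exists x, iota x = n)) as [H1|H1];
    destruct (excluded_middle_informative (exists s, Sp s /\ iota s = n)) as [H2|H2];
    try apply Inv_back; try apply Inv_forth; auto;
    apply (epsilon_spec inh (fun s => Sp s /\ iota s = n) H2).
Qed.

Lemma bf_step n p : In p (bf n) -> In p (bf (S n)).
Proof.
  simpl. unfold stepB, stepF.
  destruct (excluded_middle_informative (exists x, iota x = n));
  destruct (excluded_middle_informative (exists s, Sp s /\ iota s = n)); simpl; auto.
Qed.

Lemma bf_mono n n' p : (n <= n')%nat -> In p (bf n) -> In p (bf n').
Proof. induction 1; auto. intros H'. apply bf_step; auto. Qed.

Lemma cover_forth x : exists s, In (x, s) (bf (S (iota x))).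
Proof.
  simpl. unfold stepB, stepF.
  destruct (excluded_middle_informative (exists x', iota x' = iota x)) as [H1|H1]; [|exfalso; eauto].
  assert (E : epsilon inh (fun x' => iota x' = iota x) = x).
  { apply Hiota. apply (epsilon_spec inh (fun x' => iota x' = iota x) H1). }
  rewrite E. unfold ext_forth.
  destruct (excluded_middle_informative (exists s, Sp s /\ iota s = iota x)); eexists; simpl; eauto.
Qed.

Lemma cover_back s : Sp s -> exists x, In (x, s) (bf (S (iota s))).
Proof.
  intros Hs. simpl. unfold stepB.
  destruct (excluded_middle_informative (exists s', Sp s' /\ iota s' = iota s)) as [H1|H1]; [|exfalso; eauto].
  assert (E : epsilon inh (fun s' => Sp s' /\ iota s' = iota s) = s).
  { apply Hiota. apply (epsilon_spec inh (fun s' => Sp s' /\ iota s' = iota s) H1). }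
  rewrite E. unfold ext_back. eexists; left; eauto.
Qed.

Lemma bf_main : exists g, isometric d d g /\ forall y, Sp y <-> exists x, g x = y.
Proof.
  set (g := fun x => epsilon inh (fun s => In (x, s) (bf (S (iota x))))).
  assert (Hg : forall x, In (x, g x) (bf (S (iota x)))).
  { intros x. unfold g. apply epsilon_spec. apply cover_forth. }
  exists g. split.
  - intros x y. destruct (Inv_bf (Nat.max (S (iota x)) (S (iota y)))) as [_ I2].
    apply (I2 (x, g x) (y, g y)).
    + apply bf_mono with (S (iota x)); [apply Nat.le_max_l|apply Hg].
    + apply bf_mono with (S (iota y)); [apply Nat.le_max_r|apply Hg].
  - intros y; split.
    + intros Hy. destruct (cover_back y Hy) as [x0 Hx0]. exists x0.
      destruct (Inv_bf (Nat.max (S (iota x0)) (S (iota y)))) as [_ I2].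
      apply d_eq0.
      assert (A1 : In (x0, g x0) (bf (Nat.max (S (iota x0)) (S (iota y)))))
        by (apply bf_mono with (S (iota x0)); [apply Nat.le_max_l|apply Hg]).
      assert (A2 : In (x0, y) (bf (Nat.max (S (iota x0)) (S (iota y)))))
        by (apply bf_mono with (S (iota y)); [apply Nat.le_max_r|apply Hx0]).
      pose proof (I2 _ _ A1 A2) as E. cbn [fst snd] in E. rewrite E. apply d_refl.
    + intros [x <-]. destruct (Inv_bf (S (iota x))) as [I1 _]. apply (I1 (x, g x)); auto.
Qed.
End BF.

Lemma F1_from (D B : R -> Prop) (m : R) (M : Type) (d : M -> M -> R) :
  in_U D M d -> D 0 -> finite_set D -> (forall r, D r -> 0 <= r) ->
  is_block D B -> B m -> (forall b, B b -> b <= m) ->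
  forall r, D r -> m < r -> 2 * m < r.
Proof.
  intros HU HD0 [lD HlD] Dnn [[HBD [b0 [Hb0 [Hb0min [Hpred [Hsucc Hadd]]]]]] Hmaxl] HBm Hmax.
  assert (Hm0 : 0 < m) by (destruct (HBD m HBm); pose proof (Dnn m H); lra).
  assert (Hb00 : 0 < b0) by (destruct (HBD b0 Hb0); pose proof (Dnn b0 H); lra).
  assert (Hb0m : b0 <= m) by auto.
  apply NNPP. intros Hno.
  destruct (fin_min lD (fun r => D r /\ m < r /\ r <= 2 * m)) as [c0 [[Dc0 [Hc0a Hc0b]] Hc0min]].
  { intros r [Hr _]. apply HlD; auto. }
  { apply NNPP. intros H. apply Hno. intros r Dr Hr. apply Rnot_le_lt. intros Hr2. apply H. eauto. }
  assert (Hsc : forall q, D q -> m < q -> c0 <= q).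
  { intros q Dq Hq. destruct (Rle_or_lt c0 q); auto. apply Hc0min. repeat split; auto; lra. }
  assert (Hbig : m + b0 < c0).
  { apply Rnot_le_lt. intros Hle.
    set (B' := fun r => B r \/ r = c0).
    assert (Hcons : forall b c, consec B' b c -> (B b /\ B c /\ consec B b c) \/ (b = m /\ c = c0)).
    { intros b c [[Hb|Hb] [[Hc|Hc] [Hlt Hn]]].
      - left. repeat split; auto. intros e He. apply Hn. left; auto.
      - right. subst c. split; auto. pose proof (Hmax b Hb). destruct (Rle_or_lt m b); [lra|].
        exfalso. apply (Hn m); [left; auto|split; lra].
      - subst b. pose proof (Hmax c Hc). lra.
      - subst. lra. }
    assert (HB' : block_cond D B').
    { split.
      - intros b [Hb| ->]; auto. split; auto. lra.
      - exists b0. split; [left; auto|]. split.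
        + intros b [Hb| ->]; auto. lra.
        + split; auto. split.
          * intros b c Hbc. destruct (Hcons b c Hbc) as [[Hb [Hc Hbc']]| [-> ->]]; auto.
            unfold is_succ; repeat split; auto; try lra.
          * intros b c Hbc. destruct (Hcons b c Hbc) as [[Hb [Hc Hbc']]| [-> ->]]; auto. lra. }
    pose proof (Hmaxl B' HB' (fun r Hr => or_introl Hr) c0 (or_intror eq_refl)) as Hc.
    pose proof (Hmax c0 Hc). lra. }
  destruct (fin_max lD (fun x => B x /\ x + m < c0)) as [bb [[Hbb Hbbc] Hbbmax]].
  { intros r [Hr _]. apply HlD. apply HBD; auto. }
  { exists b0; split; auto; lra. }
  destruct (fin_min lD (fun x => B x /\ bb < x)) as [b1 [[Hb1 Hbb1] Hb1min]].
  { intros r [Hr _]. apply HlD. apply HBD; auto. }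
  { exists m. split; auto. lra. }
  assert (Hc : consec B bb b1).
  { repeat split; auto. intros e He [H1 H2]. pose proof (Hb1min e (conj He H1)). lra. }
  pose proof (Hadd _ _ Hc) as Hadd1.
  assert (Hb1c : c0 <= b1 + m).
  { destruct (Rle_or_lt c0 (b1 + m)); auto. pose proof (Hbbmax b1 (conj Hb1 H)). lra. }
  pose proof (Hmax b1 Hb1). pose proof (Hb0min bb Hbb).
  destruct (FV D M d HU HD0 b0 bb c0 m b1) as [ff [Df [K1 [K2 [K3 [K4 [K5 K6]]]]]]];
    try (apply HBD; assumption); auto; try lra.
  pose proof (Hsc ff Df ltac:(lra)). lra.
Qed.

Theorem lemma9p3 (D : R -> Prop) (B : R -> Prop) (mm : R)
  (M : Type) (d : M -> M -> R) :
  universal D ->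
  (exists B1 B2, is_block D B1 /\ is_block D B2 /\ ~ (forall r, B1 r <-> B2 r)) ->
  is_block D B ->
  (forall b, D b -> b <> 0 -> (forall c, D c -> c <> 0 -> b <= c) -> B b) ->
  B mm -> (forall b, B b -> b <= mm) ->
  in_U D M d ->
  universal (dist_set (dquot d mm)) /\
  in_U (dist_set (dquot d mm)) (classes d mm) (dquot d mm) /\
  (forall N : classes d mm -> Prop, is_copy (dquot d mm) N ->
     is_copy d (fun x => exists A : classes d mm, N A /\ proj1_sig A x)).
Proof.
  intros HuD _ HB _ HBm Hmax HU.
  destruct HuD as [[Hfin [HD0 Dnn]] _].
  assert (Dm : D mm /\ mm <> 0) by (destruct HB as [[HBD _] _]; auto).
  destruct Dm as [Dm Hm0].
  assert (mpos : 0 < mm) by (pose proof (Dnn mm Dm); lra).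
  pose proof (F1_from D B mm M d HU HD0 Hfin Dnn HB HBm Hmax) as F1.
  assert (HinQ : in_U (dist_set (dquot d mm)) (classes d mm) (dquot d mm)).
  { split; [|split; [|split; [|split]]].
    - apply (dq_metric D M d); auto.
    - apply (Q_countable D M d); auto.
    - apply (Q_hom D M d); auto.
    - intros r; tauto.
    - intros F e Hf He Hv. apply (Q_univ D M d); auto. }
  split; [|split; auto].
  - split; [|exists (classes d mm), (dquot d mm); auto].
    split; [|split].
    + pose proof Hfin as [lD HlD]. apply (fin_sub lD).
      intros r [X [Y <-]]. apply HlD. apply (dq_D D M d); auto.
    + destruct (M_inhab D M d HU HD0) as [p _]. exists (cls M d mm p), (cls M d mm p).
      apply (dq_self D M d); auto.
    + intros r [X [Y <-]]. destruct (dq_metric D M d HU HD0 Hfin mm Dm mpos F1) as [H _]. apply H.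
  - intros N [f [Hf HN]].
    pose proof HU as HU'. destruct HU' as [_ [[iota Hiota] _]].
    destruct (bf_main D M d HU HD0 (Sp M d mm N)) with (iota := iota) as [g [Hg1 Hg2]]; auto.
    { intros l y Hl. apply (S_EP D M d HU HD0 Hfin mm Dm mpos F1 f Hf N); auto. }
    exists g. split; auto.
Qed.
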